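(* Let $\mathcal{A}$ be a category with pullbacks and $\mathcal{D}$ a category. Then any orthogonal factorization system on the category $\mathrm{CartNt}[\mathcal{A},\mathcal{D}]$ (all functors $\mathcal{A}\to\mathcal{D}$, and only cartesian natural transformations as morphisms) restricts to an orthogonal factorization system on the full subcategory $\mathrm{Cart}[\mathcal{A},\mathcal{D}]$ of cartesian functors and cartesian natural transformations.
   Context: A natural transformation is cartesian if all its naturality squares are pullbacks; a functor is cartesian if it preserves pullbacks. An orthogonal factorization system $(\mathcal{E},\mathcal{M})$: both classes contain all isomorphisms and are closed under composition; each commuting square $g\circ e = m\circ f$ with $e\in\mathcal{E}$, $m\in\mathcal{M}$ has a unique diagonal $d$ with $d\circ e = f$, $m\circ d = g$; every morphism factors as $m\circ e$ with $e\in\mathcal{E}$, $m\in\mathcal{M}$. Restricting means taking the classes $\mathcal{E}\cap\mathrm{Cart}[\mathcal{A},\mathcal{D}]$ and $\mathcal{M}\cap\mathrm{Cart}[\mathcal{A},\mathcal{D}]$. *)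

(* Defs.v *)
From Stdlib Require Import ProofIrrelevance FunctionalExtensionality.

Record Category : Type := {
  ob :> Type;
  hom : ob -> ob -> Type;
  idm : forall a, hom a a;
  comp : forall a b c, hom b c -> hom a b -> hom a c;
  comp_assoc : forall a b c d (h : hom c d) (g : hom b c) (f : hom a b),
      comp a c d h (comp a b c g f) = comp a b d (comp b c d h g) f;
  comp_id_l : forall a b (f : hom a b), comp a b b (idm b) f = f;
  comp_id_r : forall a b (f : hom a b), comp a a b f (idm a) = f
}.
Arguments hom {C} a b : rename.
Arguments idm {C} a : rename.
Arguments comp {C} {a b c} g f : rename.
Arguments comp_assoc {C a b c d} h g f : rename.
Arguments comp_id_l {C a b} f : rename.
Arguments comp_id_r {C a b} f : rename.

Notation "g ∘ f" := (comp g f) (at level 40, left associativity).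

Definition is_pullback {C : Category} {x y z p : C}
  (f : hom x z) (g : hom y z) (p1 : hom p x) (p2 : hom p y) : Prop :=
  f ∘ p1 = g ∘ p2 /\
  forall (q : C) (q1 : hom q x) (q2 : hom q y), f ∘ q1 = g ∘ q2 ->
    exists! u : hom q p, p1 ∘ u = q1 /\ p2 ∘ u = q2.

Definition has_pullbacks (C : Category) : Prop :=
  forall (x y z : C) (f : hom x z) (g : hom y z),
    exists (p : C) (p1 : hom p x) (p2 : hom p y), is_pullback f g p1 p2.

Definition is_iso {C : Category} {a b : C} (f : hom a b) : Prop :=
  exists g : hom b a, g ∘ f = idm a /\ f ∘ g = idm b.

Record Functor (C D : Category) : Type := {
  fob :> C -> D;
  fmap : forall a b, hom a b -> hom (fob a) (fob b);
  fmap_id : forall a, fmap a a (idm a) = idm (fob a);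
  fmap_comp : forall a b c (g : hom b c) (f : hom a b),
      fmap a c (g ∘ f) = fmap b c g ∘ fmap a b f
}.
Arguments fob {C D} F a : rename.
Arguments fmap {C D} F {a b} u : rename.

Definition cartesian_functor {C D : Category} (F : Functor C D) : Prop :=
  forall (x y z p : C) (f : hom x z) (g : hom y z) (p1 : hom p x) (p2 : hom p y),
    is_pullback f g p1 p2 ->
    is_pullback (fmap F f) (fmap F g) (fmap F p1) (fmap F p2).

Record NatTrans {C D : Category} (F G : Functor C D) : Type := {
  component :> forall a : C, hom (F a) (G a);
  naturality : forall (a b : C) (u : hom a b),
      component b ∘ fmap F u = fmap G u ∘ component a
}.
Arguments component {C D F G} n a : rename.

Definition cartesian_nt {C D : Category} {F G : Functor C D} (α : NatTrans F G) : Prop :=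
  forall (a b : C) (u : hom a b), is_pullback (α b) (fmap G u) (fmap F u) (α a).

Lemma nt_eq {C D : Category} {F G : Functor C D} (α β : NatTrans F G) :
  (forall a, α a = β a) -> α = β.
Proof.
  destruct α as [a na], β as [b nb]; simpl; intros H.
  assert (a = b) by (apply functional_extensionality_dep; exact H).
  subst b. f_equal. apply proof_irrelevance.
Qed.

Definition nt_id {C D : Category} (F : Functor C D) : NatTrans F F.
Proof.
  refine {| component := fun a => idm (F a) |}.
  intros a b u. rewrite comp_id_l, comp_id_r. reflexivity.
Defined.

Definition nt_comp {C D : Category} {F G H : Functor C D}
  (β : NatTrans G H) (α : NatTrans F G) : NatTrans F H.
Proof.
  refine {| component := fun a => β a ∘ α a |}.
  intros a b u. rewrite <- comp_assoc, naturality, comp_assoc, naturality, comp_assoc.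
  reflexivity.
Defined.

Lemma nt_id_cartesian {C D : Category} (F : Functor C D) : cartesian_nt (nt_id F).
Proof.
  intros a b u; simpl. split.
  - rewrite comp_id_l, comp_id_r; reflexivity.
  - intros q q1 q2 Hq. rewrite comp_id_l in Hq. exists q2. split.
    + split; [symmetry; exact Hq | apply comp_id_l].
    + intros u' [_ H2]. rewrite comp_id_l in H2. symmetry; exact H2.
Qed.

Lemma nt_comp_cartesian {C D : Category} {F G H : Functor C D}
  (β : NatTrans G H) (α : NatTrans F G) :
  cartesian_nt β -> cartesian_nt α -> cartesian_nt (nt_comp β α).
Proof.
  intros Hb Ha a b u; simpl. split.
  - rewrite <- comp_assoc, naturality, comp_assoc, naturality, comp_assoc. reflexivity.
  - intros q q1 q2 Hq.
    destruct (Hb a b u) as [_ Ub]. destruct (Ha a b u) as [_ Ua].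
    rewrite <- comp_assoc in Hq.
    destruct (Ub q (α b ∘ q1) q2 Hq) as [v [[Hv1 Hv2] Hvu]].
    destruct (Ua q q1 v (eq_sym Hv1)) as [w [[Hw1 Hw2] Hwu]].
    exists w. split.
    + split; [exact Hw1|]. rewrite <- comp_assoc, Hw2. exact Hv2.
    + intros w' [H1 H2].
      assert (Ev : v = α a ∘ w').
      { apply Hvu. split.
        - rewrite comp_assoc, <- naturality, <- comp_assoc, H1. reflexivity.
        - rewrite comp_assoc. exact H2. }
      apply Hwu. split; [exact H1 | symmetry; exact Ev].
Qed.

Definition CartNtHom {C D : Category} (F G : Functor C D) : Type :=
  { α : NatTrans F G | cartesian_nt α }.

Definition CartNt (C D : Category) : Category.
Proof.
  refine {| ob := Functor C D;
            hom := fun F G => CartNtHom F G;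
            idm := fun F => exist _ (nt_id F) (nt_id_cartesian F);
            comp := fun F G H β α =>
              exist _ (nt_comp (proj1_sig β) (proj1_sig α))
                (nt_comp_cartesian _ _ (proj2_sig β) (proj2_sig α)) |}.
  - intros F G H K [h hh] [g hg] [f hf]. simpl.
    apply eq_sig_hprop; [intros; apply proof_irrelevance|]; simpl.
    apply nt_eq; intros x; simpl. apply comp_assoc.
  - intros F G [f hf]; simpl.
    apply eq_sig_hprop; [intros; apply proof_irrelevance|]; simpl.
    apply nt_eq; intros x; simpl. apply comp_id_l.
  - intros F G [f hf]; simpl.
    apply eq_sig_hprop; [intros; apply proof_irrelevance|]; simpl.
    apply nt_eq; intros x; simpl. apply comp_id_r.
Defined.

Definition FullSub (C : Category) (P : C -> Prop) : Category.
Proof.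
  refine {| ob := { x : C | P x };
            hom := fun x y => @hom C (proj1_sig x) (proj1_sig y);
            idm := fun x => idm (proj1_sig x);
            comp := fun x y z g f => g ∘ f |}.
  - intros; apply comp_assoc.
  - intros; apply comp_id_l.
  - intros; apply comp_id_r.
Defined.

Definition Cart (C D : Category) : Category :=
  FullSub (CartNt C D) cartesian_functor.

Definition MorClass (C : Category) : Type := forall a b : C, hom a b -> Prop.

Record is_OFS (C : Category) (E M : MorClass C) : Prop := {
  ofs_E_iso : forall (a b : C) (f : hom a b), is_iso f -> E a b f;
  ofs_M_iso : forall (a b : C) (f : hom a b), is_iso f -> M a b f;
  ofs_E_comp : forall (a b c : C) (f : hom a b) (g : hom b c),
      E a b f -> E b c g -> E a c (g ∘ f);
  ofs_M_comp : forall (a b c : C) (f : hom a b) (g : hom b c),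
      M a b f -> M b c g -> M a c (g ∘ f);
  ofs_lift : forall (a b x y : C) (e : hom a b) (m : hom x y) (f : hom a x) (g : hom b y),
      E a b e -> M x y m -> g ∘ e = m ∘ f ->
      exists! d : hom b x, d ∘ e = f /\ m ∘ d = g;
  ofs_fact : forall (a c : C) (h : hom a c),
      exists (b : C) (e : hom a b) (m : hom b c), E a b e /\ M b c m /\ h = m ∘ e
}.

Definition restrict_Cart {C D : Category} (E : MorClass (CartNt C D)) : MorClass (Cart C D) :=
  fun F G α => E (proj1_sig F) (proj1_sig G) α.

(* Main.v *)
Require Import Defs.

Lemma cart_reflect {C D : Category} {G H : Functor C D} (α : NatTrans G H) :
  cartesian_nt α -> cartesian_functor H -> cartesian_functor G.
Proof.
  intros Ha HH x y z p f g p1 p2 Hpb.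
  pose proof Hpb as [Hc _].
  destruct (HH x y z p f g p1 p2 Hpb) as [_ UH].
  split.
  - rewrite <- !fmap_comp, Hc. reflexivity.
  - intros q q1 q2 Hq.
    assert (E1 : fmap H f ∘ (α x ∘ q1) = fmap H g ∘ (α y ∘ q2)).
    { rewrite !comp_assoc, <- !naturality, <- !comp_assoc, Hq. reflexivity. }
    destruct (UH q _ _ E1) as [u [[Hu1 Hu2] Hun]].
    destruct (Ha p x p1) as [_ U1].
    destruct (U1 q q1 u (eq_sym Hu1)) as [v [[Hv1 Hv2] Hvn]].
    exists v. split.
    + split; [exact Hv1|].
      destruct (Ha y z g) as [_ U2].
      assert (E2 : α z ∘ (fmap G g ∘ q2) = fmap H g ∘ (α y ∘ q2)).
      { rewrite comp_assoc, naturality, comp_assoc. reflexivity. }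
      destruct (U2 q _ _ E2) as [w [_ Hwn]].
      transitivity w; [symmetry|]; apply Hwn; split.
      * rewrite comp_assoc, <- fmap_comp, <- Hc, fmap_comp, <- comp_assoc, Hv1, Hq.
        reflexivity.
      * rewrite comp_assoc, naturality, <- comp_assoc, Hv2, Hu2. reflexivity.
      * reflexivity.
      * reflexivity.
    + intros v' [H1 H2]. apply Hvn. split; [exact H1|].
      symmetry; apply Hun. split.
      * rewrite comp_assoc, <- naturality, <- comp_assoc, H1. reflexivity.
      * rewrite comp_assoc, <- naturality, <- comp_assoc, H2. reflexivity.
Qed.

Theorem lemma4p5 (A D : Category) (HA : has_pullbacks A)
  (E M : MorClass (CartNt A D)) :
  is_OFS (CartNt A D) E M ->
  is_OFS (Cart A D) (restrict_Cart E) (restrict_Cart M).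
Proof.
  intros HO. destruct HO as [Ei Mi Ec Mc Lf Fc]. split.
  - intros a b f Hf. apply Ei. exact Hf.
  - intros a b f Hf. apply Mi. exact Hf.
  - intros a b c f g H1 H2. exact (Ec _ _ _ f g H1 H2).
  - intros a b c f g H1 H2. exact (Mc _ _ _ f g H1 H2).
  - intros a b x y e m f g H1 H2 H3. exact (Lf _ _ _ _ e m f g H1 H2 H3).
  - intros [F HF] [H HH] h.
    destruct (Fc F H h) as [G [e [m [He [Hm Hh]]]]].
    assert (HG : cartesian_functor G).
    { exact (cart_reflect (proj1_sig m) (proj2_sig m) HH). }
    exists (exist _ G HG), e, m. split; [exact He|]. split; [exact Hm | exact Hh].
Qed.
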